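(* Let $L\ge2$ and let $C'=(\{0,\dots,L-1\},\delta')$ be a cellular automaton with neighborhood size $1$ and blank symbol $0$ (i.e. $\delta'(0,0,0)=0$). Define $\varphi(a)=1^{1+L-a}0^a1\in\{0,1\}^{L+2}$ for $a\in\{0,\dots,L-1\}$, and extend $\varphi$ to configurations $c:\mathbb{Z}\to\{0,\dots,L-1\}$ by $\varphi(c)(q(L+2)+k)=$ the $k$-th bit ($0\le k<L+2$, counting from $0$) of $\varphi(c(q))$. Let $r=2(L+2)$. Then there exists $\delta^{(2)}:\{0,1\}^{2r+1}\to\{0,1\}$ with $\delta^{(2)}(1,\dots,1)=1$ such that the binary cellular automaton $(\{0,1\},\delta^{(2)})$, started from $b_0=\varphi(c_0)$ where $c_0(u)=1$ if $u=0$ and $c_0(u)=0$ otherwise, produces configurations $b_0,b_1,\dots$ with $b_t=\varphi(c_t)$ for all $t\ge0$, where $c_0,c_1,\dots$ are the configurations produced by $C'$ from $c_0$.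
   Context: A cellular automaton $(A,\delta)$ with neighborhood size $r$ acts on configurations $c:\mathbb{Z}\to A$; one step maps $c$ to $c'$ with $c'(u)=\delta(c(u-r),\dots,c(u),\dots,c(u+r))$. *)

(* Defs.v *)
From Stdlib Require Import ZArith.
From mathcomp Require Import all_boot.
Set Implicit Arguments. Unset Strict Implicit. Unset Printing Implicit Defensive.

Definition ca_step (A : Type) (r : nat) (delta : (2 * r).+1.-tuple A -> A)
  (c : Z -> A) : Z -> A :=
  fun u => delta (mktuple (fun i : 'I_(2 * r).+1 =>
                              c (u - Z.of_nat r + Z.of_nat i)%Z)).

Definition ca_run (A : Type) (r : nat) (delta : (2 * r).+1.-tuple A -> A)
  (c0 : Z -> A) (t : nat) : Z -> A := iter t%N (ca_step delta) c0.

(* k-th bit (from 0) of phi(a) = 1^(1+L-a) 0^a 1, a word of length L+2. *)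
Definition phi_bit (L a k : nat) : bool := (k < 1 + L - a) || (L < k).

Definition phi_conf (L : nat) (c : Z -> 'I_L) : Z -> bool :=
  fun u => phi_bit L (c (u / Z.of_nat (L + 2))%Z)
                     (Z.to_nat (u mod Z.of_nat (L + 2))%Z).

Definition init_conf (L : nat) (hL : 1 < L) : Z -> 'I_L :=
  fun u => if (u =? 0)%Z then Ordinal hL else Ordinal (ltnW hL).

(* Main.v *)
Require Import Defs.
From Stdlib Require Import ZArith Lia ClassicalEpsilon Classical FunctionalExtensionality.
From mathcomp Require Import all_boot zify.
Set Implicit Arguments. Unset Strict Implicit. Unset Printing Implicit Defensive.

Open Scope Z_scope.

Lemma phi_at L (c : Z -> 'I_L) Q K : 0 <= K < Z.of_nat (L+2) ->
  phi_conf c (Q * Z.of_nat (L+2) + K) = phi_bit L (c Q) (Z.to_nat K).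
Proof.
move=> HK; rewrite /phi_conf.
rewrite -(Z.div_unique (Q * Z.of_nat (L+2) + K) (Z.of_nat (L+2)) Q K); [|left; lia|lia].
rewrite -(Z.mod_unique (Q * Z.of_nat (L+2) + K) (Z.of_nat (L+2)) Q K) //; [left; lia|lia].
Qed.

Close Scope Z_scope.

Lemma pb_next L a K : phi_bit L a K = false -> K < L -> phi_bit L a K.+1 = false.
Proof.
rewrite /phi_bit => /norP[h1 h2] hK; apply/norP; split; move: h1 h2; rewrite -!leqNgt; lia.
Qed.

Lemma pb_last L a : 0 < a -> phi_bit L a L = false.
Proof. move=> ha; rewrite /phi_bit; apply/norP; split; rewrite -leqNgt; lia. Qed.

Lemma pb_end L a : phi_bit L a L.+1 = true.
Proof. by rewrite /phi_bit ltnSn orbT. Qed.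

Lemma pb_zero L K : K < L + 2 -> phi_bit L 0 K = true.
Proof. move=> h; rewrite /phi_bit; apply/orP; case: (leqP K L) => h'; [left|right]; lia. Qed.

Lemma pb_inj L (a b : 'I_L) : (forall K, K < L + 2 -> phi_bit L a K = phi_bit L b K) -> a = b.
Proof.
move=> H; apply: val_inj => /=.
have ha := ltn_ord a; have hb := ltn_ord b.
wlog hab : a b H ha hb / a < b.
  move=> W; case: (ltngtP a b) => // h; first by apply: W.
  by symmetry; apply: W => // K HK; rewrite H.
have := H (L + 1 - b) ltac:(lia).
rewrite /phi_bit.
have -> : (L + 1 - b < 1 + L - a) = true by apply/idP; lia.
have -> : (L + 1 - b < 1 + L - b) = false by apply/negbTE; rewrite -leqNgt; lia.
have -> : (L < L + 1 - b) = false by apply/negbTE; rewrite -leqNgt; lia.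
by [].
Qed.

Definition win L (c : Z -> 'I_L) (u : Z) : (2 * (2 * (L + 2))).+1.-tuple bool :=
  mktuple (fun i : 'I_(2 * (2 * (L + 2))).+1 =>
     phi_conf c (u - Z.of_nat (2 * (L + 2)) + Z.of_nat i)%Z).

Open Scope Z_scope.

Lemma win_eq L (c c' : Z -> 'I_L) u u' : win c u = win c' u' ->
  forall i, 0 <= i <= 4 * Z.of_nat (L+2) ->
  phi_conf c (u - 2 * Z.of_nat (L+2) + i) = phi_conf c' (u' - 2 * Z.of_nat (L+2) + i).
Proof.
move=> E i Hi.
have Hlt : (Z.to_nat i < (2 * (2 * (L + 2))).+1)%N by lia.
have := congr1 (fun t => tnth t (Ordinal Hlt)) E.
rewrite /= !tnth_mktuple /= Z2Nat.id; last lia.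
by have -> : Z.of_nat (2 * (L + 2)) = 2 * Z.of_nat (L+2) by lia.
Qed.

Lemma win_all L (c : Z -> 'I_L) u : win c u = nseq_tuple _ true ->
  forall i, 0 <= i <= 4 * Z.of_nat (L+2) ->
  phi_conf c (u - 2 * Z.of_nat (L+2) + i) = true.
Proof.
move=> E i Hi.
have Hlt : (Z.to_nat i < (2 * (2 * (L + 2))).+1)%N by lia.
have := congr1 (fun t => tnth t (Ordinal Hlt)) E.
rewrite /= tnth_mktuple tnth_nseq /= Z2Nat.id; last lia.
by have -> : Z.of_nat (2 * (L + 2)) = 2 * Z.of_nat (L+2) by lia.
Qed.

Lemma phiB L (c : Z -> 'I_L) p : phi_conf c p = false -> phi_conf c (p + 1) = true ->
  p mod Z.of_nat (L+2) = Z.of_nat L.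
Proof.
set M := Z.of_nat (L+2).
have HM : 0 < M by rewrite /M; lia.
have Hp := Z_div_mod_eq_full p M.
have Hk := Z.mod_pos_bound p M HM.
set q := p / M in Hp *; set k := p mod M in Hp Hk *.
rewrite Hp Z.mul_comm phi_at //.
have -> : q * M + k + 1 = q * M + (k + 1) by lia.
move=> h0.
case: (Z.lt_total k (Z.of_nat L)) => [hl|[//|hg]].
  rewrite phi_at; last lia.
  rewrite (_ : Z.to_nat (k+1) = (Z.to_nat k).+1); last lia.
  by rewrite pb_next //; lia.
move: h0; rewrite (_ : Z.to_nat k = L.+1); last (rewrite /M in Hk; lia).
by rewrite pb_end.
Qed.

Lemma zero_at L (c : Z -> 'I_L) (u : Z) j : -1 <= j <= 1 -> (0 < c ((u / Z.of_nat (L+2) + j)%Z))%N ->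
  let i := (j+2) * Z.of_nat (L+2) + Z.of_nat L - u mod Z.of_nat (L+2) in
  0 <= i /\ i + 1 <= 4 * Z.of_nat (L+2) /\
  phi_conf c (u - 2 * Z.of_nat (L+2) + i) = false /\
  phi_conf c (u - 2 * Z.of_nat (L+2) + (i + 1)) = true.
Proof.
set M := Z.of_nat (L+2).
have HM : 0 < M by rewrite /M; lia.
have Hp := Z_div_mod_eq_full u M.
have Hk := Z.mod_pos_bound u M HM.
set q := u / M in Hp *; set k := u mod M in Hp Hk *.
move=> Hj Hc i.
have E1 : u - 2 * M + i = (q + j) * M + Z.of_nat L by rewrite /i; lia.
have E2 : u - 2 * M + (i + 1) = (q + j) * M + (Z.of_nat L + 1) by rewrite /i; lia.
have HML : M = Z.of_nat L + 2 by rewrite /M; lia.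
split; first (rewrite /i; nia).
split; first (rewrite /i; nia).
rewrite E1 E2 !phi_at; try (rewrite /M; lia).
rewrite Nat2Z.id (_ : Z.to_nat (Z.of_nat L + 1) = L.+1); last lia.
by rewrite pb_last // pb_end.
Qed.

Lemma step_congr L (delta' : (2 * 1).+1.-tuple 'I_L -> 'I_L) (c c' : Z -> 'I_L) q q' :
  (forall j, -1 <= j <= 1 -> c (q + j) = c' (q' + j)) ->
  ca_step delta' c q = ca_step delta' c' q'.
Proof.
move=> H; rewrite /ca_step; congr delta'; apply: eq_mktuple => i.
have hi := ltn_ord i.
rewrite (_ : q - Z.of_nat 1 + Z.of_nat i = q + (-1 + Z.of_nat i)); last lia.
rewrite (_ : q' - Z.of_nat 1 + Z.of_nat i = q' + (-1 + Z.of_nat i)); last lia.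
apply: H; lia.
Qed.

Lemma key1 L (delta' : (2 * 1).+1.-tuple 'I_L -> 'I_L) (c c' : Z -> 'I_L) u u' j :
  win c u = win c' u' -> -1 <= j <= 1 -> (0 < c ((u / Z.of_nat (L+2) + j)%Z))%N ->
  phi_conf (ca_step delta' c) u = phi_conf (ca_step delta' c') u'.
Proof.
move=> E Hj Hc.
have HW := win_eq E.
have [Hi0 [Hi1 [b0 b1]]] := zero_at Hj Hc.
set M := Z.of_nat (L+2) in HW Hi0 Hi1 b0 b1 *.
set i := (j + 2) * M + Z.of_nat L - u mod M in Hi0 Hi1 b0 b1.
have HM : 0 < M by rewrite /M; lia.
have HML : M = Z.of_nat L + 2 by rewrite /M; lia.
have Hp := Z_div_mod_eq_full u M.
have Hk := Z.mod_pos_bound u M HM.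
have Hp' := Z_div_mod_eq_full u' M.
have Hk' := Z.mod_pos_bound u' M HM.
rewrite HW in b0; last lia.
rewrite HW in b1; last lia.
rewrite Z.add_assoc in b1.
have hB := phiB b0 b1.
set p := u' - 2 * M + i in hB.
have Hpp := Z_div_mod_eq_full p M.
rewrite hB in Hpp.
set q := u / M in Hp Hc *; set k := u mod M in Hp Hk *.
set q' := u' / M in Hp' *; set k' := u' mod M in Hp' Hk'.
have Ekk : k = k'.
  have EX : (q' + j - p / M) * M = k - k'.
    move: Hpp; move: (p / M) => D; rewrite /p /i => HP.
    rewrite Hp' in HP; lia.
  move: EX; set X := q' + j - p / M => EX.
  have [hx|[hx|hx]] := Z.lt_trichotomy X 0.
  - have : X * M <= - M by nia.
    lia.
  - rewrite hx in EX; lia.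
  - have : X * M >= M by nia.
    lia.
have Hq : forall j', -1 <= j' <= 1 -> c (q + j') = c' (q' + j').
  move=> j' Hj'; apply: pb_inj => K HK.
  have := HW ((j' + 2) * M + Z.of_nat K - k) ltac:(nia).
  rewrite (_ : u - 2 * M + ((j' + 2) * M + Z.of_nat K - k) = (q + j') * M + Z.of_nat K); last lia.
  rewrite (_ : u' - 2 * M + ((j' + 2) * M + Z.of_nat K - k) = (q' + j') * M + Z.of_nat K); last lia.
  rewrite !phi_at; try lia.
  by rewrite Nat2Z.id.
rewrite /phi_conf -/M -/q -/k -/q' -/k' -Ekk.
by rewrite (step_congr delta' Hq).
Qed.

Lemma key0 L (hL : (1 < L)%N) (delta' : (2 * 1).+1.-tuple 'I_L -> 'I_L)
  (hblank : delta' (nseq_tuple (2 * 1).+1 (Ordinal (ltnW hL))) = Ordinal (ltnW hL))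
  (c : Z -> 'I_L) u :
  (forall j, -1 <= j <= 1 -> nat_of_ord (c ((u / Z.of_nat (L+2) + j)%Z)) = 0%N) ->
  phi_conf (ca_step delta' c) u = true.
Proof.
move=> H; rewrite /phi_conf.
have -> : ca_step delta' c (u / Z.of_nat (L+2)) = Ordinal (ltnW hL).
  rewrite /ca_step -hblank; congr delta'; apply: eq_from_tnth => i.
  rewrite tnth_mktuple tnth_nseq; apply: val_inj => /=.
  have hi := ltn_ord i.
  rewrite (_ : u / Z.of_nat (L+2) - Z.of_nat 1 + Z.of_nat i = u / Z.of_nat (L+2) + (-1 + Z.of_nat i)); last lia.
  apply: H; lia.
apply: pb_zero.
have := Z.mod_pos_bound u (Z.of_nat (L+2)) ltac:(lia).
lia.
Qed.

Close Scope Z_scope.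

Definition delta2 L (delta' : (2 * 1).+1.-tuple 'I_L -> 'I_L)
  (w : (2 * (2 * (L + 2))).+1.-tuple bool) : bool :=
  match excluded_middle_informative (exists p : (Z -> 'I_L) * Z, win p.1 p.2 = w) with
  | left H => let p := proj1_sig (constructive_indefinite_description _ H) in
              phi_conf (ca_step delta' p.1) p.2
  | right _ => true
  end.

Lemma key L (hL : 1 < L) (delta' : (2 * 1).+1.-tuple 'I_L -> 'I_L)
  (hblank : delta' (nseq_tuple (2 * 1).+1 (Ordinal (ltnW hL))) = Ordinal (ltnW hL))
  (c c' : Z -> 'I_L) u u' : win c u = win c' u' ->
  phi_conf (ca_step delta' c) u = phi_conf (ca_step delta' c') u'.
Proof.
move=> E.
case: (classic (exists j, (-1 <= j <= 1)%Z /\ (0 < c ((u / Z.of_nat (L+2) + j)%Z))%N)).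
  by move=> [j [Hj Hc]]; apply: key1 Hj Hc.
move=> N.
case: (classic (exists j, (-1 <= j <= 1)%Z /\ (0 < c' ((u' / Z.of_nat (L+2) + j)%Z))%N)).
  by move=> [j [Hj Hc]]; symmetry; apply: key1 Hj Hc.
move=> N'.
rewrite !(key0 hblank) // => j Hj; apply/eqP; rewrite -leqn0 leqNgt; apply/negP => h.
- by apply: N'; exists j.
- by apply: N; exists j.
Qed.

Theorem lemma1 (L : nat) (hL : 1 < L)
  (delta' : (2 * 1).+1.-tuple 'I_L -> 'I_L)
  (hblank : delta' (nseq_tuple (2 * 1).+1 (Ordinal (ltnW hL))) = Ordinal (ltnW hL)) :
  exists delta2 : (2 * (2 * (L + 2))).+1.-tuple bool -> bool,
    delta2 (nseq_tuple (2 * (2 * (L + 2))).+1 true) = true /\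
    forall t : nat,
      ca_run delta2 (phi_conf (init_conf hL)) t
      = phi_conf (ca_run delta' (init_conf hL) t).
Proof.
have corr : forall c u, delta2 delta' (win c u) = phi_conf (ca_step delta' c) u.
  move=> c u; rewrite /delta2.
  case: excluded_middle_informative => [H|H]; last by exfalso; apply: H; exists (c, u).
  case: (constructive_indefinite_description _ H) => [[c1 u1] /= Hp].
  simpl; exact: (key hblank Hp).
exists (delta2 delta'); split.
  rewrite /delta2.
  case: excluded_middle_informative => [H|//].
  case: (constructive_indefinite_description _ H) => [[c1 u1] /= Hp].
  apply: (key0 hblank) => j Hj.
  apply/eqP; rewrite -leqn0 leqNgt; apply/negP => hc.
  have [Hi0 [Hi1 [b0 _]]] := zero_at Hj hc.
  by rewrite (win_all Hp) in b0; [|lia].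
have step : forall c, ca_step (delta2 delta') (phi_conf c) = phi_conf (ca_step delta' c).
  by move=> c; apply: functional_extensionality => u; rewrite -corr.
move=> t; rewrite /ca_run; elim: t => [|t IH] //=.
by rewrite IH step.
Qed.
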